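(* Let $\mathbf{X}$ be a binary matrix. If the rectangle cover graph $\mathcal{G}(\mathbf{X})$ contains an odd antihole with at least $7$ vertices (as an induced subgraph), then $\mathbf{X}$ has a submatrix which, after permuting its rows and columns, equals $\mathbf{W}$ or $\overline{\mathbf{I}}_4$.
   Context: For a binary matrix $\mathbf{X}$, $\mathrm{supp}(\mathbf{X})=\{(i,j):x_{i,j}=1\}$; a submatrix is obtained by deleting rows and columns; a rectangle is a set $I\times J\subseteq\mathrm{supp}(\mathbf{X})$. The rectangle cover graph $\mathcal{G}(\mathbf{X})$ has vertex set $\mathrm{supp}(\mathbf{X})$, two vertices being adjacent iff some rectangle of $\mathbf{X}$ contains both. A hole is an induced chordless cycle of length at least $4$; an odd antihole is an induced subgraph whose complement is a hole of odd length. Let $\mathbf{C}_3$ be the $3\times 3$ binary matrix with $1$s exactly at $(1,1),(1,2),(2,2),(2,3),(3,1),(3,3)$, and $\mathbf{1}$ the all-ones column vector of length $3$. Then $\mathbf{W}=\begin{bmatrix}\mathbf{C}_3&\mathbf{1}\\ \mathbf{1}^\top&1\end{bmatrix}$ and $\overline{\mathbf{I}}_4=\begin{bmatrix}\mathbf{C}_3&\mathbf{1}\\ \mathbf{1}^\top&0\end{bmatrix}$, both in $\{0,1\}^{4\times4}$. *)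

(* Defs.v *)
From mathcomp Require Import all_boot all_order all_algebra.
Set Implicit Arguments. Unset Strict Implicit. Unset Printing Implicit Defensive.

(* Binary matrices are represented as 'M[bool]_(m, n); entry true = 1. *)

Section RectCover.
Variables (m n : nat) (X : 'M[bool]_(m, n)).

Definition supp : {set 'I_m * 'I_n} := [set p | X p.1 p.2].

Definition is_rectangle (I : {set 'I_m}) (J : {set 'I_n}) : bool :=
  setX I J \subset supp.

Definition rc_adj (u v : 'I_m * 'I_n) : Prop :=
  [/\ u \in supp, v \in supp, u != v &
      exists (I : {set 'I_m}) (J : {set 'I_n}),
        [/\ is_rectangle I J, u \in setX I J & v \in setX I J]].

Definition cyc_consec (k : nat) (a b : 'I_k) : bool :=
  (b == (a.+1 %% k) :> nat) || (a == (b.+1 %% k) :> nat).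

(* G(X) contains an odd antihole on k vertices: an injective family of k
   support vertices v_0,...,v_{k-1}, k odd and k >= 4 (hole length), such that
   the complement of the induced subgraph is the cycle v_0 v_1 ... v_{k-1} v_0,
   i.e. for distinct a b: v_a, v_b adjacent in G(X) iff a, b not cyclically
   consecutive. *)
Definition odd_antihole (k : nat) : Prop :=
  [/\ odd k, 4 <= k &
    exists v : 'I_k -> 'I_m * 'I_n,
      [/\ injective v, (forall a, v a \in supp) &
          forall a b : 'I_k, a != b -> (rc_adj (v a) (v b) <-> ~~ cyc_consec a b)]].

End RectCover.

Definition C3 (i j : nat) : bool :=
  [|| (i == 0) && (j == 0), (i == 0) && (j == 1), (i == 1) && (j == 1),
      (i == 1) && (j == 2), (i == 2) && (j == 0) | (i == 2) && (j == 2)].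

Definition Wmx : 'M[bool]_4 :=
  \matrix_(i < 4, j < 4)
    if (i < 3) && (j < 3) then C3 i j else true.

Definition I4bar : 'M[bool]_4 :=
  \matrix_(i < 4, j < 4)
    if (i < 3) && (j < 3) then C3 i j else if (i == 3 :> nat) && (j == 3 :> nat) then false else true.

Definition has_perm_submatrix (m n : nat) (X : 'M[bool]_(m, n)) (A : 'M[bool]_4) : Prop :=
  exists (r : 'I_4 -> 'I_m) (c : 'I_4 -> 'I_n),
    [/\ injective r, injective c & forall i j, X (r i) (c j) = A i j].

(* Main.v *)
Require Import Defs.
From mathcomp Require Import all_boot all_order all_algebra zify.
From Stdlib Require Import Classical.
Lemma rowsW (A : 'M[bool]_4) : (A = Wmx \/ A = I4bar) -> forall i i' : 'I_4, (forall j, A i j = A i' j) -> i = i'.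
Proof.
move=> HA i i' H.
have := H ord0; have := H (inord 1); have := H (inord 2); have := H (inord 3).
clear H; case: HA => ->; rewrite !mxE;
case: i i' => [[|[|[|[|?]]]] ?] [[|[|[|[|?]]]] ?] //=; rewrite ?inordK //=; by intros; apply: val_inj.
Qed.
Lemma colsW (A : 'M[bool]_4) : (A = Wmx \/ A = I4bar) -> forall i i' : 'I_4, (forall j, A j i = A j i') -> i = i'.
Proof.
move=> HA i i' H.
have := H ord0; have := H (inord 1); have := H (inord 2); have := H (inord 3).
clear H; case: HA => ->; rewrite !mxE;
case: i i' => [[|[|[|[|?]]]] ?] [[|[|[|[|?]]]] ?] //=; rewrite ?inordK //=; by intros; apply: val_inj.
Qed.
Lemma core (m n : nat) (X : 'M[bool]_(m, n)) (p0 p1 p2 p3 : 'I_m) (g0 g1 g2 g3 : 'I_n) :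
  X p0 g0 = false -> X p1 g1 = false -> X p2 g2 = false ->
  X p0 g1 -> X p0 g2 -> X p1 g0 -> X p1 g2 -> X p2 g0 -> X p2 g1 ->
  X p3 g0 -> X p3 g1 -> X p3 g2 -> X p0 g3 -> X p1 g3 -> X p2 g3 ->
  has_perm_submatrix X Wmx \/ has_perm_submatrix X I4bar.
Proof.
move=> h00 h11 h22 h01 h02 h10 h12 h20 h21 h30 h31 h32 h03 h13 h23.
pose r (i : 'I_4) := match val i with 0 => p0 | 1 => p1 | 2 => p2 | _ => p3 end.
pose c (j : 'I_4) := match val j with 0 => g1 | 1 => g2 | 2 => g0 | _ => g3 end.
suff main : forall A, A = Wmx \/ A = I4bar -> X p3 g3 = A (inord 3) (inord 3) ->
   has_perm_submatrix X A.
  case h33: (X p3 g3); [left; apply: main; [by left|] | right; apply: main; [by right|]];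
  by rewrite h33 mxE inordK.
move=> A HA h33.
have E : forall i j, X (r i) (c j) = A i j.
  case: HA h33 => -> h33; case=> [[|[|[|[|?]]]] ?] [[|[|[|[|?]]]] ?] //=;
  rewrite mxE //= ?h00 ?h11 ?h22 ?h01 ?h02 ?h10 ?h12 ?h20 ?h21 ?h30 ?h31 ?h32 ?h03 ?h13 ?h23 //;
  by rewrite h33 mxE inordK.
exists r, c; split => //.
- move=> i i' e. apply: (rowsW _ HA) => j; by rewrite -!E e.
- move=> i i' e; apply: (colsW _ HA) => j; by rewrite -!E e.
Qed.
Definition sh k (kp : 0 < k) (t : nat) : 'I_k := Ordinal (ltn_pmod t kp).
Arguments sh {k}.

Lemma modn_lt2 x k : x < k + k -> x %% k = if x < k then x else x - k.
Proof.
move=> h2; case: (ltnP x k) => h; first by rewrite modn_small.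
rewrite -{1}(subnK h) modnDr modn_small //; lia.
Qed.

Lemma cyc_sym k (a b : 'I_k) : cyc_consec a b = cyc_consec b a.
Proof. by rewrite /cyc_consec orbC. Qed.

Lemma far k (kp : 0 < k) u w : u + 2 <= w -> w + 2 <= u + k ->
  sh kp u != sh kp w /\ ~~ cyc_consec (sh kp u) (sh kp w).
Proof.
move=> h1 h2; rewrite /cyc_consec -val_eqE /=.
have xk : u %% k < k by rewrite ltn_pmod.
have yk : w %% k < k by rewrite ltn_pmod.
have -> : w %% k = (u %% k + (w - u)) %% k.
  by rewrite modnDml; congr (_ %% _); lia.
move: xk; set x := u %% k => xk.
rewrite (modn_lt2 (x + (w - u))); last lia.
rewrite (modn_lt2 x.+1); last lia.
case: ifP => c1.
  rewrite (modn_lt2 (x + (w - u)).+1); last lia.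
  by case: ifP => c2; case: ifP => c3; split; lia.
rewrite (modn_lt2 (x + (w - u) - k).+1); last lia.
by case: ifP => c2; case: ifP => c3; split; lia.
Qed.

Lemma cons k (kp : 0 < k) u w : 2 <= k -> w = u.+1 ->
  sh kp u != sh kp w /\ cyc_consec (sh kp u) (sh kp w).
Proof.
move=> k2 ->; rewrite /cyc_consec -val_eqE /=.
have xk : u %% k < k by rewrite ltn_pmod.
have -> : u.+1 %% k = (u %% k).+1 %% k by rewrite -addn1 -modnDml addn1.
rewrite eqxx /=; split => //.
rewrite (modn_lt2 (u %% k).+1); last lia.
case: ifP => c; lia.
Qed.

Theorem lemma4 (m n : nat) (X : 'M[bool]_(m, n)) :
  (exists k : nat, 7 <= k /\ odd_antihole X k) ->
  has_perm_submatrix X Wmx \/ has_perm_submatrix X I4bar.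
Proof.
move=> [k [hk [hodd h4 [v [vinj vsupp hadj]]]]].
have kp : 0 < k by lia.
have F1 : forall a, X (v a).1 (v a).2 by move=> a; have := vsupp a; rewrite inE.
have F2 : forall a b, a != b -> ~~ cyc_consec a b -> X (v a).1 (v b).2.
  move=> a b ab nc; have [_ _ _ [I [J [rect ha hb]]]] := (hadj a b ab).2 nc.
  have : ((v a).1, (v b).2) \in supp X.
    apply: (subsetP rect); rewrite !inE /=.
    by move: ha hb; rewrite !inE => /andP[-> _] /andP[_ ->].
  by rewrite inE.
have F3 : forall a b, a != b -> cyc_consec a b -> ~~ (X (v a).1 (v b).2 && X (v b).1 (v a).2).
  move=> a b ab cab; apply/negP => /andP[h1 h2].
  suff : rc_adj X (v a) (v b) by move/(hadj a b ab); rewrite cab.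
  split; [exact: vsupp | exact: vsupp | |].
    by apply/eqP => /vinj /eqP; rewrite (negbTE ab).
  exists [set (v a).1; (v b).1], [set (v a).2; (v b).2]; split.
  - apply/subsetP => -[x y]; rewrite !inE /=.
    by case/andP => /orP[]/eqP-> /orP[]/eqP->; rewrite ?h1 ?h2 ?F1.
  - by rewrite !inE !eqxx.
  - by rewrite !inE !eqxx !orbT.
pose s i := sh kp i.
have F2' : forall u w, u + 2 <= w -> w + 2 <= u + k ->
    X (v (s u)).1 (v (s w)).2 && X (v (s w)).1 (v (s u)).2.
  move=> u w h1 h2; have [ne nc] := @far k kp u w h1 h2.
  rewrite F2 //; apply: F2; by rewrite 1?eq_sym 1?cyc_sym.
pose f i := ~~ X (v (s i)).1 (v (s i.+1)).2.
pose g i := ~~ X (v (s i.+1)).1 (v (s i)).2.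
have fg : forall i, f i || g i.
  move=> i; rewrite /f /g -negb_and; have [ne c] := @cons k kp i i.+1 (ltac:(lia)) erefl.
  exact: F3.
have key : forall a0 a1 b0 b1 p q : 'I_k,
  X (v a0).1 (v b0).2 = false -> X (v a1).1 (v b1).2 = false ->
  X (v a0).1 (v b1).2 -> X (v a1).1 (v b0).2 -> X (v p).1 (v q).2 = false ->
  (forall x y, x \in [:: a0; a1; b0; b1] -> y \in [:: p; q] ->
      X (v x).1 (v y).2 && X (v y).1 (v x).2) ->
  has_perm_submatrix X Wmx \/ has_perm_submatrix X I4bar.
  move=> a0 a1 b0 b1 p q z0 z1 o1 o2 z2 H.
  have I1 : forall x, x \in [:: a0; a1; b0; b1] -> X (v x).1 (v p).2 && X (v p).1 (v x).2.
    by move=> x hx; apply: H; rewrite // !inE eqxx.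
  have I2 : forall x, x \in [:: a0; a1; b0; b1] -> X (v x).1 (v q).2 && X (v q).1 (v x).2.
    by move=> x hx; apply: H; rewrite // !inE eqxx orbT.
  have := I1 a0; have := I1 a1; have := I1 b0; have := I1 b1.
  have := I2 a0; have := I2 a1; have := I2 b0; have := I2 b1.
  rewrite !inE !eqxx ?orbT /=.
  move=> /(_ isT) /andP[q1 q2] /(_ isT) /andP[q3 q4] /(_ isT) /andP[q5 q6] /(_ isT) /andP[q7 q8].
  move=> /(_ isT) /andP[p1 p2] /(_ isT) /andP[p3 p4] /(_ isT) /andP[p5 p6] /(_ isT) /andP[p7 p8].
  apply: (@core m n X (v a0).1 (v a1).1 (v p).1 (v q).1 (v b0).2 (v b1).2 (v q).2 (v p).2) => //.
have [[i Hi]|Hno] := classic (exists i, (f i && f i.+1) || (g i && g i.+1)); last first.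
  exfalso.
  have alt : forall i, f i.+1 = ~~ f i.
    move=> i; have := fg i; have := fg i.+1.
    have : ~~ ((f i && f i.+1) || (g i && g i.+1)) by apply/negP => H; apply: Hno; exists i.
    by case: (f i); case: (f i.+1); case: (g i); case: (g i.+1).
  have parf : forall i, f i = f 0 (+) odd i.
    elim => [|i IH]; first by rewrite addbF.
    by rewrite alt IH /= addbN.
  have fk : f k = f 0.
    rewrite /f; have -> : s k = s 0 by apply: val_inj; rewrite /= modnn mod0n.
    by have -> : s k.+1 = s 1 by apply: val_inj; rewrite /= -addn1 modnDl.
  by move: (parf k); rewrite fk hodd; case: (f 0).
have farL : forall x y, x \in [:: s i; s i.+1; s i.+2] -> y \in [:: s (i + 4); s (i + 5)] ->
    X (v x).1 (v y).2 && X (v y).1 (v x).2.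
  move=> x y; rewrite !inE; case/or3P => /eqP->; case/orP => /eqP->; apply: F2'; lia.
have /orP[pq|pq] : ~~ X (v (s (i + 4))).1 (v (s (i + 5))).2 || ~~ X (v (s (i + 5))).1 (v (s (i + 4))).2.
- rewrite -negb_and; have [ne c] := @cons k kp (i + 4) (i + 5) (ltac:(lia)) (ltac:(lia)).
  exact: F3.
- case/orP: Hi => /andP[z0 z1].
  + apply: (key (s i) (s i.+1) (s i.+1) (s i.+2) (s (i + 4)) (s (i + 5))).
    * exact: negbTE z0.
    * exact: negbTE z1.
    * by have /andP[] := F2' i i.+2 (ltac:(lia)) (ltac:(lia)).
    * exact: F1.
    * exact: negbTE pq.
    * move=> x y hx hy; apply: farL.
        by move: hx; rewrite !inE; case/or4P => /eqP->; rewrite eqxx ?orbT.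
      by move: hy; rewrite !inE; case/orP => /eqP->; rewrite eqxx ?orbT.
  + apply: (key (s i.+1) (s i.+2) (s i) (s i.+1) (s (i + 4)) (s (i + 5))).
    * exact: negbTE z0.
    * exact: negbTE z1.
    * exact: F1.
    * by have /andP[] := F2' i i.+2 (ltac:(lia)) (ltac:(lia)).
    * exact: negbTE pq.
    * move=> x y hx hy; apply: farL.
        by move: hx; rewrite !inE; case/or4P => /eqP->; rewrite eqxx ?orbT.
      by move: hy; rewrite !inE; case/orP => /eqP->; rewrite eqxx ?orbT.
- case/orP: Hi => /andP[z0 z1].
  + apply: (key (s i) (s i.+1) (s i.+1) (s i.+2) (s (i + 5)) (s (i + 4))).
    * exact: negbTE z0.
    * exact: negbTE z1.
    * by have /andP[] := F2' i i.+2 (ltac:(lia)) (ltac:(lia)).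
    * exact: F1.
    * exact: negbTE pq.
    * move=> x y hx hy; apply: farL.
        by move: hx; rewrite !inE; case/or4P => /eqP->; rewrite eqxx ?orbT.
      by move: hy; rewrite !inE; case/orP => /eqP->; rewrite eqxx ?orbT.
  + apply: (key (s i.+1) (s i.+2) (s i) (s i.+1) (s (i + 5)) (s (i + 4))).
    * exact: negbTE z0.
    * exact: negbTE z1.
    * exact: F1.
    * by have /andP[] := F2' i i.+2 (ltac:(lia)) (ltac:(lia)).
    * exact: negbTE pq.
    * move=> x y hx hy; apply: farL.
        by move: hx; rewrite !inE; case/or4P => /eqP->; rewrite eqxx ?orbT.
      by move: hy; rewrite !inE; case/orP => /eqP->; rewrite eqxx ?orbT.
Qed.
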